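(* Let $n,\ell$ be positive integers, let $f:(\mathbb{R}^n,0)\to(\mathbb{R}^n,0)$ be a $C^\infty$ map-germ, and for each $i$ with $1\le i\le \ell$ let $\mu_i:(\mathbb{R}^n,0)\to\mathbb{R}$ be a $C^\infty$ function-germ. Then the map-germ $F:(\mathbb{R}^n,0)\to\mathbb{R}^{n+\ell}$ defined by \[ F=\left(f,\ \mu_1|Jf|^2,\ \ldots,\ \mu_\ell|Jf|^2\right) \] is a frontal.
   Context: All map-germs, function-germs and vector fields are $C^\infty$. For a map-germ $f:(\mathbb{R}^n,0)\to(\mathbb{R}^n,0)$, $|Jf|$ denotes the Jacobian determinant of $f$ (so $|Jf|^2$ is its square). A vector field along a map-germ $F:(\mathbb{R}^n,0)\to\mathbb{R}^{n+\ell}$ is a germ $\Phi:(\mathbb{R}^n,0)\to T\mathbb{R}^{n+\ell}$ with $\pi\circ\Phi=F$, where $\pi$ is the tangent bundle projection; write $\Phi(x)=(F(x),\phi(x))$ with $\phi(x)\in T_{F(x)}\mathbb{R}^{n+\ell}\cong\mathbb{R}^{n+\ell}$. $F$ is called a frontal if there exist vector fields $\Phi_1,\ldots,\Phi_\ell$ along $F$, $\Phi_i=(F,\phi_i)$, such that: (1) for every $i$ and every germ of vector field $\xi$ on $(\mathbb{R}^n,0)$, $\phi_i(x)\cdot dF_x(\xi(x))=0$ (Euclidean scalar product) for all $x$ near $0$; (2) $\phi_i(0)\neq 0$ for every $i$; (3) $\phi_1(0),\ldots,\phi_\ell(0)$ are linearly independent. *)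

(* Defs.v *)
From HB Require Import structures.
From mathcomp Require Import all_boot all_order all_algebra.
From mathcomp Require Import all_classical all_reals all_analysis.
Set Implicit Arguments. Unset Strict Implicit. Unset Printing Implicit Defensive.
Import Order.TTheory GRing.Theory Num.Theory.
Import numFieldNormedType.Exports.
Local Open Scope classical_set_scope.
Local Open Scope ring_scope.

Section Defs.
Variable R : realType.

Definition ebasis (n : nat) (i : 'I_n) : 'rV[R]_n := delta_mx 0 i.

Definition iter_partial (n : nat) (s : seq 'I_n) (g : 'rV[R]_n -> R)
  : 'rV[R]_n -> R :=
  foldr (fun i h => fun x => derive h x (ebasis i)) g s.

Definition smooth_fun_germ (n : nat) (g : 'rV[R]_n -> R) : Prop :=
  \forall x \near (0 : 'rV[R]_n),
    forall s : seq 'I_n,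
      {for x, continuous (iter_partial s g)} /\
      (forall i : 'I_n, derivable (iter_partial s g) x (ebasis i)).

Definition smooth_map_germ (n m : nat) (g : 'rV[R]_n -> 'rV[R]_m) : Prop :=
  forall j : 'I_m, smooth_fun_germ (fun x => g x ord0 j).

Definition jacdet (n : nat) (f : 'rV[R]_n -> 'rV[R]_n) (x : 'rV[R]_n) : R :=
  \det (\matrix_(i < n, j < n) derive (fun y => f y ord0 i) x (ebasis j)).

Definition dotp (m : nat) (a b : 'rV[R]_m) : R := \sum_(k < m) a ord0 k * b ord0 k.

(* F : (R^n,0) -> R^(n+l) is a frontal: there exist C^oo vector fields
   Phi_i = (F, phi_i) along F satisfying (1), (2), (3). *)
Definition frontal (n l : nat) (F : 'rV[R]_n -> 'rV[R]_(n + l)) : Prop :=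
  exists phi : 'I_l -> 'rV[R]_n -> 'rV[R]_(n + l),
    (forall i, smooth_map_germ (phi i)) /\
    (forall (i : 'I_l) (xi : 'rV[R]_n -> 'rV[R]_n), smooth_map_germ xi ->
       \forall x \near (0 : 'rV[R]_n), dotp (phi i x) ('d F x (xi x)) = 0) /\
    (forall i, phi i 0 != 0) /\
    row_free (\matrix_(i < l) phi i 0).

End Defs.

(* Main.v *)
Require Import Defs.
From HB Require Import structures.
From mathcomp Require Import all_boot all_order all_algebra.
From mathcomp Require Import all_classical all_reals all_analysis.
From mathcomp Require Import perm ring.
Import Order.TTheory GRing.Theory Num.Theory.
Import numFieldNormedType.Exports.
Local Open Scope ring_scope.
Local Open Scope classical_set_scope.

Section Smooth.
Set Implicit Arguments.
Unset Strict Implicit.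
Variable R : realType.
Variable n : nat.
Local Notation V := 'rV[R]_n.

Definition Sm (g : V -> R) (x : V) := forall s : seq 'I_n,
  {for x, continuous (iter_partial s g)} /\
  (forall i : 'I_n, derivable (iter_partial s g) x (ebasis R i)).

Definition Smk (k : nat) (g : V -> R) (x : V) := forall s : seq 'I_n, (size s <= k)%N ->
  {for x, continuous (iter_partial s g)} /\
  (forall i : 'I_n, derivable (iter_partial s g) x (ebasis R i)).

Definition Dp (j : 'I_n) (g : V -> R) : V -> R := fun y => derive g y (ebasis R j).

Lemma ip_rcons s j g : iter_partial (rcons s j) g = iter_partial s (Dp j g).
Proof. by rewrite /iter_partial foldr_rcons. Qed.

Lemma ip_cons i s g : iter_partial (i :: s) g = Dp i (iter_partial s g).
Proof. by []. Qed.

Lemma ip_near s (f g : V -> R) (x : V) : (\forall y \near x, f y = g y) ->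
  \forall y \near x, iter_partial s f y = iter_partial s g y.
Proof.
elim: s => [//|i s IH] H.
apply: filterS (near_join (IH H)) => y Hy.
by rewrite !ip_cons /Dp; apply: near_eq_derive.
Qed.

Lemma cont_near (f g : V -> R) (x : V) : (\forall y \near x, f y = g y) ->
  {for x, continuous f} -> {for x, continuous g}.
Proof.
move=> H cf; have e := nbhs_singleton H.
rewrite /prop_for /continuous_at -e.
exact: cvg_trans (near_eq_cvg H) cf.
Qed.

Lemma Sm_Dp j g x : Sm g x -> Sm (Dp j g) x.
Proof. by move=> H s; rewrite -ip_rcons; apply: H. Qed.

Lemma Sm_cst (c : R) x : Sm (fun _ => c) x.
Proof.
have E : forall s, exists k : R, iter_partial s (fun _ : V => c) = (fun _ => k).
  elim=> [|i s [k IH]]; first by exists c.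
  exists 0; rewrite ip_cons IH /Dp; apply/funext => y.
  exact: (derive_cst k).
move=> s; have [k ->] := E s; split.
  exact: cst_continuous.
move=> i; exact: (derivable_cst k).
Qed.

Lemma ip_add_near k (a b : V -> R) (y : V) :
  (\forall z \near y, Smk k a z /\ Smk k b z) ->
  forall s, (size s <= k)%N ->
  \forall z \near y, iter_partial s (fun w => a w + b w) z
     = iter_partial s a z + iter_partial s b z.
Proof.
move=> H; elim => [|i s IH] Hs; first by apply: filterE.
have IH' := near_join (IH (ltnW Hs)).
apply: filterS (filterI IH' H) => z [Hz [Ha Hb]].
rewrite !ip_cons /Dp (@near_eq_derive _ _ _ _ _ _ (ebasis R i) Hz).
rewrite deriveD //.
  by apply: (Ha s (ltnW Hs)).2.
by apply: (Hb s (ltnW Hs)).2.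
Qed.


Lemma Smk_add k (a b : V -> R) (y : V) :
  (\forall z \near y, Smk k a z /\ Smk k b z) -> Smk k (fun w => a w + b w) y.
Proof.
move=> H s Hs.
have E := ip_add_near H Hs.
have E' : \forall z \near y, iter_partial s a z + iter_partial s b z =
   iter_partial s (fun w => a w + b w) z by apply: filterS E.
have [Ha Hb] : Smk k a y /\ Smk k b y := nbhs_singleton H.
have [ca da] := Ha s Hs; have [cb db] := Hb s Hs.
split.
  apply: cont_near E' _.
  exact: cvgD ca cb.
move=> i; apply: near_eq_derivable E' _.
exact: derivableD (da i) (db i).
Qed.

Lemma Sm_Smk g x : Sm g x <-> forall k, Smk k g x.
Proof.
split; first by move=> H k s _; apply: H.
by move=> H s; apply: (H (size s)).
Qed.

Lemma Sm_add (a b : V -> R) (y : V) :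
  (\forall z \near y, Sm a z /\ Sm b z) -> Sm (fun w => a w + b w) y.
Proof.
move=> H; apply/Sm_Smk => k; apply: Smk_add.
by apply: filterS H => z [/Sm_Smk Ha /Sm_Smk Hb].
Qed.

Lemma Dp_mul_near j (a b : V -> R) (y : V) :
  (\forall z \near y, Sm a z /\ Sm b z) ->
  \forall z \near y, Dp j (fun w => a w * b w) z =
     Dp j a z * b z + a z * Dp j b z.
Proof.
move=> H; apply: filterS H => z [Ha Hb].
rewrite /Dp deriveM; last 2 first.
  exact: ((Ha [::]).2 j).
  exact: ((Hb [::]).2 j).
by rewrite /GRing.scale /= addrC mulrC.
Qed.

Lemma Smk_mul k : forall (a b : V -> R) (y : V),
  (\forall z \near y, Sm a z /\ Sm b z) -> Smk k (fun w => a w * b w) y.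
Proof.
elim: k => [|k IH] a b y H s Hs.
  have [Ha Hb] : Sm a y /\ Sm b y := nbhs_singleton H.
  case: s Hs => // _; split.
    exact: cvgM ((Ha [::]).1) ((Hb [::]).1).
  by move=> i; exact: derivableM ((Ha [::]).2 i) ((Hb [::]).2 i).
case/lastP: s Hs => [|s j] Hs.
  have [Ha Hb] : Sm a y /\ Sm b y := nbhs_singleton H.
  split.
    exact: cvgM ((Ha [::]).1) ((Hb [::]).1).
  by move=> i; exact: derivableM ((Ha [::]).2 i) ((Hb [::]).2 i).
rewrite size_rcons ltnS in Hs.
rewrite ip_rcons.
have E1 := ip_near s (Dp_mul_near j H).
have HH : \forall z \near y,
    Smk k (fun w => Dp j a w * b w) z /\ Smk k (fun w => a w * Dp j b w) z.
  apply: filterS (near_join H) => z Hz; split; apply: IH;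
    apply: filterS Hz => w [Ha Hb]; split => //; exact: Sm_Dp.
have E2 := ip_add_near HH Hs.
have E : \forall z \near y,
   iter_partial s (fun w => Dp j a w * b w) z +
   iter_partial s (fun w => a w * Dp j b w) z =
   iter_partial s (Dp j (fun w => a w * b w)) z.
  by apply: filterS (filterI E1 E2) => z [-> ->].
have [H1 H2] := nbhs_singleton HH.
have [c1 d1] := H1 s Hs; have [c2 d2] := H2 s Hs.
split.
  apply: cont_near E _.
  exact: cvgD c1 c2.
move=> i; apply: near_eq_derivable E _.
exact: derivableD (d1 i) (d2 i).
Qed.

Lemma Sm_mul (a b : V -> R) (y : V) :
  (\forall z \near y, Sm a z /\ Sm b z) -> Sm (fun w => a w * b w) y.
Proof. by move=> H; apply/Sm_Smk => k; apply: Smk_mul. Qed.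

Definition sm (g : V -> R) := \forall x \near (0 : V), Sm g x.

Lemma smE g : smooth_fun_germ g <-> sm g.
Proof. by []. Qed.

Lemma sm_ext (f g : V -> R) : (forall x, f x = g x) -> sm f -> sm g.
Proof. by move=> e; have -> : f = g by apply/funext. Qed.

Lemma sm_cst c : sm (fun _ => c).
Proof. by apply: filterE => x; apply: Sm_cst. Qed.

Lemma sm_Dp j g : sm g -> sm (Dp j g).
Proof. by apply: filterS => x; apply: Sm_Dp. Qed.

Lemma sm_add a b : sm a -> sm b -> sm (fun w => a w + b w).
Proof.
move=> ha hb; apply: filterS (near_join (filterI ha hb)) => y Hy.
exact: Sm_add.
Qed.

Lemma sm_mul a b : sm a -> sm b -> sm (fun w => a w * b w).
Proof.
move=> ha hb; apply: filterS (near_join (filterI ha hb)) => y Hy.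
exact: Sm_mul.
Qed.

Lemma sm_sum (I : Type) (r : seq I) (P : pred I) (F : I -> V -> R) :
  (forall i, sm (F i)) -> sm (fun x => \sum_(i <- r | P i) F i x).
Proof.
move=> HF; elim: r => [|i r IH].
  by apply: sm_ext (sm_cst 0) => x; rewrite big_nil.
case Pi: (P i).
  by apply: sm_ext (sm_add (HF i) IH) => x; rewrite big_cons Pi.
by apply: sm_ext IH => x; rewrite big_cons Pi.
Qed.

Lemma sm_prod (I : Type) (r : seq I) (P : pred I) (F : I -> V -> R) :
  (forall i, sm (F i)) -> sm (fun x => \prod_(i <- r | P i) F i x).
Proof.
move=> HF; elim: r => [|i r IH].
  by apply: sm_ext (sm_cst 1) => x; rewrite big_nil.
case Pi: (P i).
  by apply: sm_ext (sm_mul (HF i) IH) => x; rewrite big_cons Pi.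
by apply: sm_ext IH => x; rewrite big_cons Pi.
Qed.

Lemma sm_det m (G : 'I_m -> 'I_m -> V -> R) : (forall i j, sm (G i j)) ->
  sm (fun x => \det (\matrix_(i, j) G i j x)).
Proof.
move=> HG.
have H : sm (fun x => \sum_(s <- index_enum {perm 'I_m} | predT s)
      (fun (s : {perm 'I_m}) x => (-1) ^+ s * \prod_i G i (s i) x) s x).
  apply: sm_sum => s; apply: sm_mul; first exact: sm_cst.
  exact: sm_prod.
apply: sm_ext H => x; rewrite /determinant; apply: eq_bigr => s _.
by congr (_ * _); apply: eq_bigr => i _; rewrite mxE.
Qed.


Lemma Dp_mul j (a b : V -> R) (x : V) :
  derivable a x (ebasis R j) -> derivable b x (ebasis R j) ->
  Dp j (fun w => a w * b w) x = Dp j a x * b x + a x * Dp j b x.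
Proof.
move=> ha hb; rewrite /Dp deriveM //.
by rewrite /GRing.scale /= addrC mulrC.
Qed.

Lemma sm_adj m (G : 'I_m -> 'I_m -> V -> R) : (forall i j, sm (G i j)) ->
  forall i j, sm (fun x => \adj (\matrix_(a, b) G a b x) i j).
Proof.
move=> HG i j.
have H : sm (fun x => (-1) ^+ (j + i) *
   \det (\matrix_(a, b) G (lift j a) (lift i b) x)).
  apply: sm_mul; first exact: sm_cst.
  by apply: sm_det => a b; apply: HG.
apply: sm_ext H => x; rewrite mxE /cofactor; congr (_ * \det _).
by apply/matrixP => a b; rewrite !mxE.
Qed.

End Smooth.

Lemma diff_nd (R : realType) (V W : normedModType R) (F : V -> W) (x : V) :
  ~ differentiable F x -> ('d F x : V -> W) = 0.
Proof.
move=> nd; rewrite /diff /xget; case: pselect => [exP|//].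
exfalso; apply: nd; apply/diffP; rewrite /diff /xget.
case: pselect => [exP'|nE]; last by exfalso; apply: nE.
by case: (sigW exP') => d /= /asboolW.
Qed.

Lemma dotp_sum (R : realType) (m n : nat) (p : 'rV[R]_m) (c : 'I_n -> R)
  (w : 'I_n -> 'rV[R]_m) :
  dotp p (\sum_(j < n) c j *: w j) = \sum_(j < n) c j * dotp p (w j).
Proof.
rewrite /dotp.
under eq_bigr do rewrite summxE big_distrr /=.
rewrite exchange_big /=; apply: eq_bigr => j _.
rewrite big_distrr /=; apply: eq_bigr => k _.
by rewrite mxE mulrCA.
Qed.

Lemma dotp_row_mx (R : realType) (n l : nat) (a c : 'rV[R]_n) (b d : 'rV[R]_l) :
  dotp (row_mx a b) (row_mx c d) = dotp a c + dotp b d.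
Proof.
rewrite /dotp big_split_ord /=.
by congr (_ + _); apply: eq_bigr => k _; rewrite ?row_mxEl ?row_mxEr.
Qed.

Theorem theorem1 (R : realType) (n l : nat) (hn : (0 < n)%N) (hl : (0 < l)%N)
  (f : 'rV[R]_n -> 'rV[R]_n) (mu : 'I_l -> 'rV[R]_n -> R) :
  smooth_map_germ f -> f 0 = 0 ->
  (forall i : 'I_l, smooth_fun_germ (mu i)) ->
  frontal (fun x : 'rV[R]_n =>
    row_mx (f x) (\row_(i < l) (mu i x * jacdet f x ^+ 2))).
Proof.
move=> hf _ hmu.
pose fk (k : 'I_n) := fun x : 'rV[R]_n => f x ord0 k.
have hfk : forall k, sm (fk k) by move=> k; apply: hf.
pose P (k j : 'I_n) := Dp j (fk k).
have hP : forall k j, sm (P k j) by move=> k j; apply: sm_Dp.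
pose M x := \matrix_(k, j) P k j x.
pose J := fun x => jacdet f x.
have JE : forall x, J x = \det (M x) by [].
have hJ : sm J by apply: sm_ext (sm_det hP) => x.
pose c (i : 'I_l) x := \row_(j < n) (J x * Dp j (mu i) x + 2 * mu i x * Dp j J x).
have hc : forall i j, sm (fun x => c i x ord0 j).
  move=> i j; have H : sm (fun x => J x * Dp j (mu i) x + 2 * mu i x * Dp j J x).
    apply: sm_add; apply: sm_mul.
    - exact: hJ.
    - by apply: sm_Dp; apply: hmu.
    - by apply: sm_mul; [apply: sm_cst | apply: hmu].
    - by apply: sm_Dp; apply: hJ.
  by apply: sm_ext H => x; rewrite mxE.
pose a (i : 'I_l) x := - (c i x *m \adj (M x)).
have ha : forall i k, sm (fun x => a i x ord0 k).
  move=> i k.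
  have H : sm (fun x => \sum_(j <- index_enum 'I_n | true)
                 (fun j x => (-1) * (c i x ord0 j * \adj (M x) j k)) j x).
    apply: sm_sum => j; apply: sm_mul; first exact: sm_cst.
    by apply: sm_mul; [apply: hc | apply: sm_adj].
  apply: sm_ext H => x; rewrite !mxE -sumrN; apply: eq_bigr => j _.
  by rewrite mulN1r.
pose e (i : 'I_l) : 'rV[R]_l := \row_(m < l) ((m == i)%:R : R).
exists (fun i x => row_mx (a i x) (e i)).
split.
  move=> i j; case: (split_ordP j) => k ->.
    by apply: sm_ext (ha i k) => x; rewrite row_mxEl.
  by apply: sm_ext (@sm_cst R n ((k == i)%:R)) => x; rewrite row_mxEr mxE.
split.
  move=> i xi _.
  have H1 : \forall x \near (0 : 'rV[R]_n),
      (forall k, Sm (fk k) x) /\ (forall m, Sm (mu m) x) /\ Sm J x.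
    apply: filterI; first exact: filter_forall hfk.
    by apply: filterI; [exact: filter_forall hmu | exact: hJ].
  apply: filterS H1 => x [Hf [Hmu HJ]].
  set F := (fun x : 'rV[R]_n => row_mx _ _).
  case: (pselect (differentiable F x)) => dF; last first.
    rewrite (diff_nd dF) /dotp big1 // => k _.
    rewrite (_ : (0 : 'rV[R]_n -> 'rV[R]_(n + l)) (xi x) = 0) //. by rewrite (_ : (0 : 'rV[R]_(n + l)) ord0 k = 0) ?mulr0 // mxE.
  rewrite [xi x]row_sum_delta linear_sum /=.
  under eq_bigr do rewrite linearZ /= -deriveE //.
  rewrite dotp_sum big1 // => j _.
  suff -> : dotp (row_mx (a i x) (e i)) ('D_(delta_mx 0 j) F x) = 0 by rewrite mulr0.
  have dj : derivable F x (ebasis R j) := diff_derivable dF.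
  have DE : 'D_(ebasis R j) F x =
      row_mx (\row_k P k j x) (\row_m Dp j (fun t => mu m t * J t ^+ 2) x).
    rewrite derive_mx //; apply/matrixP => i0 k; rewrite !mxE (ord1 i0).
    case: (split_ordP k) => k' ->.
      rewrite mxE.
      have -> : (fun t => F t 0 (lshift l k')) = fk k'.
        by apply/funext => t; rewrite /F row_mxEl.
      by [].
    rewrite mxE.
    have -> : (fun t => F t 0 (rshift n k')) = (fun t => mu k' t * J t ^+ 2).
      by apply/funext => t; rewrite /F row_mxEr mxE.
    by [].
  change (delta_mx 0 j) with (ebasis R j).
  rewrite DE dotp_row_mx.
  have -> : dotp (e i) (\row_m Dp j (fun t => mu m t * J t ^+ 2) x) =
            Dp j (fun t => mu i t * J t ^+ 2) x.
    rewrite /dotp (bigD1 i) //= big1 => [|m /negbTE Hm]; last by rewrite !mxE Hm mul0r.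
    by rewrite !mxE eqxx mul1r addr0.
  have -> : dotp (a i x) (\row_k P k j x) = (a i x *m M x) 0 j.
    by rewrite /dotp mxE; apply: eq_bigr => k _; rewrite !mxE.
  rewrite /a mulNmx -mulmxA mul_adj_mx mul_mx_scalar -JE !mxE.
  have -> : (fun t => mu i t * J t ^+ 2) = (fun t => mu i t * (fun t => J t * J t) t).
    by apply/funext => t; rewrite expr2.
  have dmu := (Hmu i [::]).2 j.
  have dJ := (HJ [::]).2 j.
  rewrite Dp_mul //; last exact: derivableM.
  rewrite Dp_mul //.
  ring.
split.
  move=> i; apply/negP => /eqP H.
  have := congr1 (fun v : 'rV[R]_(n + l) => v ord0 (rshift n i)) H.
  by rewrite /= row_mxEr !mxE eqxx; apply/eqP; rewrite oner_eq0.
set A := \matrix_(i < l) _.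
have AE : A = row_mx (\matrix_(i < l) a i 0) 1%:M.
  apply/matrixP => i j; rewrite mxE; case: (split_ordP j) => k ->.
    by rewrite !row_mxEl [in RHS]mxE.
  by rewrite !row_mxEr !mxE eq_sym.
have A1 : A *m col_mx 0 1%:M = 1%:M.
  by rewrite AE mul_row_col mulmx0 mul1mx add0r.
rewrite /row_free eqn_leq rank_leq_row /=.
by rewrite -{1}(mxrank1 R l) -A1 mxrankM_maxl.
Qed.
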